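(* For every integer $k\ge1$, let $X_k=U_{k+1}$ and $Y_k=U_k\overset{k+2}{\sqcup}U_0$. Then $d_{\mathrm{GH}}(X_k,Y_k)\ge\frac k4$.
   Context: For metric spaces $X,Y$ and $a>0$, $X\overset{a}{\sqcup}Y$ denotes the disjoint union $Z=X\sqcup Y$ with $d_Z=d_X$ on $X$, $d_Z=d_Y$ on $Y$, and $d_Z(z,z')=a$ when one point lies in $X$ and the other in $Y$. The sequence $(U_k)_{k\ge0}$ is defined by: $U_0$ is a one-point space, $U_1$ is a two-point space with distance $1$, and $U_k=U_{k-2}\overset{k}{\sqcup}U_{k-2}$ for $k>1$. For a map $f:X\to Y$, $\operatorname{dis}(f)=\sup_{x,x'\in X}|d_X(x,x')-d_Y(f(x),f(x'))|$; for $f:X\to Y$, $g:Y\to X$, $\operatorname{codis}(f,g)=\sup_{x\in X,y\in Y}|d_X(x,g(y))-d_Y(f(x),y)|$. The Gromov--Hausdorff distance between compact metric spaces satisfies $d_{\mathrm{GH}}(X,Y)=\frac12\inf_{f:X\to Y,\,g:Y\to X}\max\{\operatorname{dis}(f),\operatorname{dis}(g),\operatorname{codis}(f,g)\}$ (equivalent to the usual definition via isometric embeddings into a common metric space). *)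

(* Defs.v *)
From mathcomp Require Import all_boot all_order all_algebra.
From mathcomp Require Import boolp classical_sets reals.
Set Implicit Arguments. Unset Strict Implicit. Unset Printing Implicit Defensive.
Import Order.TTheory GRing.Theory Num.Theory.
Local Open Scope ring_scope.
Local Open Scope classical_set_scope.

Record fmet (R : realType) := FMet { pt :> finType ; dst : pt -> pt -> R }.
Arguments FMet {R} pt dst.
Arguments dst {R} _ _ _.

Definition disj_union (R : realType) (X Y : fmet R) (a : R) : fmet R :=
  FMet (pt X + pt Y)%type
    (fun z z' => match z, z' with
                 | inl x, inl x' => dst X x x'
                 | inr y, inr y' => dst Y y y'
                 | _, _ => a end).

Fixpoint U (R : realType) (k : nat) : fmet R :=
  match k with
  | 0 => FMet unit (fun _ _ => 0)
  | 1 => FMet bool (fun b b' => if b == b' then 0 else 1)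
  | (j.+2) as k' => disj_union (U R j) (U R j) k'%:R
  end.

(* dis(f) = sup_{x,x'} |d(x,x') - d(f x, f x')|  (finite, nonneg. terms) *)
Definition dis (R : realType) (X Y : fmet R) (f : X -> Y) : R :=
  \big[Num.max/0]_(x : X) \big[Num.max/0]_(x' : X)
     `|dst X x x' - dst Y (f x) (f x')|.

Definition codis (R : realType) (X Y : fmet R) (f : X -> Y) (g : Y -> X) : R :=
  \big[Num.max/0]_(x : X) \big[Num.max/0]_(y : Y)
     `|dst X x (g y) - dst Y (f x) y|.

Definition dGH (R : realType) (X Y : fmet R) : R :=
  2^-1 * inf [set r : R | exists (f : X -> Y) (g : Y -> X),
                 r = Num.max (dis f) (Num.max (dis g) (codis f g))].

(* Main.v *)
Require Import Defs.
From mathcomp Require Import all_boot all_order all_algebra.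
From mathcomp Require Import boolp classical_sets reals.
From mathcomp Require Import lra.
Import Order.TTheory GRing.Theory Num.Theory.
Local Open Scope ring_scope.

Lemma Ugap (R : realType) (m : nat) : forall (x0 : U R m) (t : R),
  0 <= t -> t < m%:R -> exists x1 : U R m, t < dst _ x1 x0 <= t + 2.
Proof.
elim/ltn_ind: m => -[|[|j]] IH x0 t t0 tm.
- lra.
- exists (~~ x0) => /=; case: x0 => /=; lra.
- case: (ltP t j%:R) => tj.
  + case: x0 => a.
    * have [x1 H] := IH j (ltnW (ltnSn _)) a t t0 tj. by exists (inl x1).
    * have [x1 H] := IH j (ltnW (ltnSn _)) a t t0 tj. by exists (inr x1).
  + case: x0 => a.
    * exists (inr a) => /=. move: tm; rewrite -addn2 natrD /=; lra.
    * exists (inl a) => /=. move: tm; rewrite -addn2 natrD /=; lra.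
Qed.

Lemma Uinh (R : realType) (m : nat) : exists x : U R m, True.
Proof.
elim/ltn_ind: m => -[|[|j]] IH.
- by exists tt.
- by exists true.
- have [a _] := IH j (ltnW (ltnSn _)). by exists (inl a).
Qed.


Lemma le_bmax (R : realType) (T : finType) (F : T -> R) (x : T) :
  F x <= \big[Num.max/0]_(y : T) F y.
Proof.
have : x \in index_enum T by rewrite mem_index_enum.
elim: (index_enum T) => [|a s IH] //.
rewrite inE big_cons => /orP [/eqP <-|/IH h].
  by rewrite le_max lexx.
by rewrite le_max h orbT.
Qed.

Theorem lemma2 (R : realType) (k : nat) (hk : (1 <= k)%N) :
  dGH (U R k.+1) (disj_union (U R k) (U R 0) k.+2%:R) >= k%:R / 4.
Proof.
rewrite /dGH.
suff H : k%:R / 2 <= inf [set r : R | exists (f : U R k.+1 -> disj_union (U R k) (U R 0) k.+2%:R) (g : disj_union (U R k) (U R 0) k.+2%:R -> U R k.+1),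
                 r = Num.max (dis f) (Num.max (dis g) (codis f g))].
  have k0 : 0 <= k%:R :> R by rewrite ler0n.
  lra.
apply: lb_le_inf.
  have [a _] := Uinh R k.+1.
  by eexists; exists (fun=> (inr tt : disj_union (U R k) (U R 0) k.+2%:R)), (fun=> a).
move=> r [f [g ->]].
set e := codis f g.
suff : k%:R / 2 <= e.
  move=> he; apply: (le_trans he).
  by rewrite le_max le_max lexx !orbT.
have e0 : 0 <= e.
  rewrite /e /codis.
  elim/big_ind: _ => //.
    by move=> x y hx hy; rewrite le_max hx.
  move=> i _; elim/big_ind: _ => //.
    by move=> x y hx hy; rewrite le_max hx.
have hc : forall x y, `|dst _ x (g y) - dst _ (f x) y| <= e.
  move=> x y; rewrite /e /codis.
  apply: le_trans; last first.
  exact: (@le_bmax R (pt (U R k.+1)) (fun x0 => \big[Num.max/0]_(y0 : pt (disj_union (U R k) (U R 0) k.+2%:R)) `|dst _ x0 (g y0) - dst _ (f x0) y0|) x).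
  exact: (@le_bmax R (pt (disj_union (U R k) (U R 0) k.+2%:R)) (fun y0 => `|dst _ x (g y0) - dst _ (f x) y0|) y).
case: (leP (k%:R / 2) e) => // ek.
have ekl : e < k.+1%:R.
  have : 0 <= k%:R :> R by rewrite ler0n.
  rewrite -addn1 natrD. lra.
have [x1 /andP [h1 h2]] := @Ugap R k.+1 (g (inr tt)) e e0 ekl.
have := hc x1 (inr tt).
have k2 : k.+2%:R = k%:R + 2 :> R by rewrite -addn2 natrD.
case E: (f x1) => [y|[]].
  have -> : dst (disj_union (U R k) (U R 0) k.+2%:R) (inl y) (inr tt) = k.+2%:R by [].
  rewrite k2 => h3.
  have : k%:R + 2 - dst _ x1 (g (inr tt)) <= e.
    by apply: le_trans h3; rewrite distrC; apply: ler_norm.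
  lra.
have -> : dst (disj_union (U R k) (U R 0) k.+2%:R) (inr tt) (inr tt) = 0 by [].
move=> h3.
have : dst _ x1 (g (inr tt)) <= e.
  by apply: le_trans h3; rewrite subr0; apply: ler_norm.
lra.
Qed.
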